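(* Let $G=(V,E,L)$ be a graph with loops, let $\{i,i\}\in L^+$, and let $M\subseteq N(i)$ with $i\in M$; set $d:=|M|$. Consider the variables $z_p$, $p\in V\cup E\cup L$, together with auxiliary variables $z_S$ for all $S\subseteq M$ with $|S|\ge2$ and $S\notin E$. Then the set of all such vectors satisfying $$z_{ii}\ \ge\sum_{J\subseteq M:\, i\in J}\frac{\big(\ell_d(J,M\setminus J)\big)^2}{\ell_{d-1}(J\setminus\{i\},M\setminus J)},\qquad \ell_d(J,M\setminus J)\ge 0\quad\forall J\subseteq M$$ is a closed convex set. Moreover, its projection onto the space of variables $z_p$, $p\in V\cup E\cup L$, contains $\mathrm{QP}(G)$ (i.e., it is a convex relaxation of $\mathrm{QP}(G)$).
   Context: A graph with loops is $G=(V,E,L)$: $V$ finite node set, $E$ a set of unordered pairs of distinct nodes, $L$ a set of loops $\{i,i\}$ partitioned as $L=L^-\cup L^+$ (minus/plus loops). $\mathrm{QP}(G):=\mathrm{conv}\{z\in\mathbb{R}^{V\cup E\cup L}: z_{ii}\ge z_i^2\ \forall\{i,i\}\in L^+,\ z_{ii}\le z_i^2\ \forall \{i,i\}\in L^-,\ z_{ij}=z_iz_j\ \forall \{i,j\}\in E,\ z_i\in[0,1]\ \forall i\in V\}$. For a plus loop $\{i,i\}$, $N(i):=\{j\in V:\{i,j\}\in E\cup L\}$ (so $i\in N(i)$). For $S\subseteq M$: $z_\emptyset:=1$, $z_{\{k\}}:=z_k$, and for $|S|\ge2$, $z_S$ is the edge variable if $S\in E$ and the auxiliary variable otherwise (the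 loop variable $z_{ii}$ is distinct). For disjoint $J_1,J_2$ with $|J_1\cup J_2|=d$, $\ell_d(J_1,J_2):=\sum_{t\subseteq J_2}(-1)^{|t|}z_{J_1\cup t}$. Each $u^2/v$ denotes the closed perspective: $u^2/v$ if $v>0$, $0$ if $u=v=0$, $+\infty$ if $u\neq0,v=0$. *)

(* Defs.v *)
From mathcomp Require Import all_boot all_order all_algebra.
From mathcomp Require Import all_classical all_reals all_analysis.
Set Implicit Arguments. Unset Strict Implicit. Unset Printing Implicit Defensive.
Import Order.TTheory GRing.Theory Num.Theory.
Local Open Scope ring_scope.

(* A graph with loops G = (V, E, L), L = Lm ∪ Lp, is given by
   V : finType, E : {set {set V}} (unordered pairs of distinct nodes),
   Lm, Lp : {set V} (the nodes carrying a minus / plus loop). *)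

Section GraphVars.
Variables (V : finType) (E : {set {set V}}) (L : {set V}) (M : {set V}).

Definition edgeT := {e : {set V} | e \in E}.
Definition loopT := {k : V | k \in L}.
Definition auxT := {S : {set V} | [&& S \subset M, (1 < #|S|)%N & S \notin E]}.
Definition origT := (V + edgeT + loopT)%type.
Definition fullT := (origT + auxT)%type.

Variable R : realType.

Definition zV (z : origT -> R) (k : V) : R := z (inl (inl k)).
(* edge variable z_S (for S ∈ E; 0 otherwise, never used) *)
Definition zE (z : origT -> R) (S : {set V}) : R :=
  match @insub _ (fun e : {set V} => e \in E) edgeT S with
  | Some e => z (inl (inr e)) | None => 0 end.
(* loop variable z_kk (for k ∈ L; 0 otherwise, never used) *)
Definition zL (z : origT -> R) (k : V) : R :=
  match @insub _ (fun k : V => k \in L) loopT k with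
  | Some l => z (inr l) | None => 0 end.

Definition zS (z : origT -> R) (a : auxT -> R) (S : {set V}) : R :=
  if #|S| == 0%N then 1
  else if #|S| == 1%N then
    (if [pick k in S] is Some k then zV z k else 0)
  else if S \in E then zE z S
  else match @insub _ (fun S : {set V} => [&& S \subset M, (1 < #|S|)%N & S \notin E]) auxT S with
       | Some s => a s | None => 0 end.

(* ℓ_d(J1,J2) = Σ_{t ⊆ J2} (-1)^|t| z_{J1 ∪ t}   (d = |J1 ∪ J2| is only a label) *)
Definition ell (z : origT -> R) (a : auxT -> R) (J1 J2 : {set V}) : R :=
  \sum_(t : {set V} | t \subset J2) (-1) ^+ #|t| * zS z a (J1 :|: t).

End GraphVars.

(* closed perspective u^2/v, valued in the extended reals *)
Definition persp (R : realType) (u v : R) : \bar R :=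
  if 0 < v then ((u ^+ 2) / v)%:E
  else if (u == 0) && (v == 0) then 0%E else +oo%E.

Definition nbhd (V : finType) (E : {set {set V}}) (L : {set V}) (i : V) : {set V} :=
  [set j | ([set i; j] \in E) || ((j == i) && (i \in L))].

Definition convex_hull (R : realType) (T : Type) (A : set (T -> R)) : set (T -> R) :=
  [set x | exists (n : nat) (w : 'I_n -> R) (p : 'I_n -> (T -> R)),
      (forall k, 0 <= w k) /\ \sum_(k < n) w k = 1 /\
      (forall k, A (p k)) /\ x = \sum_(k < n) w k *: p k].

Definition QP_points (R : realType) (V : finType) (E : {set {set V}}) (Lm Lp : {set V})
  : set (origT E (Lm :|: Lp) -> R) :=
  [set z | (forall k, k \in Lp -> zV z k ^+ 2 <= zL z k) /\
           (forall k, k \in Lm -> zL z k <= zV z k ^+ 2) /\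
           (forall j k, j != k -> [set j; k] \in E -> zE z [set j; k] = zV z j * zV z k) /\
           (forall k, 0 <= zV z k <= 1)].

Definition QP (R : realType) (V : finType) (E : {set {set V}}) (Lm Lp : {set V}) :=
  convex_hull (@QP_points R V E Lm Lp).

Definition relax (R : realType) (V : finType) (E : {set {set V}}) (Lm Lp : {set V})
  (M : {set V}) (i : V) : set (fullT E (Lm :|: Lp) M -> R) :=
  [set x : fullT E (Lm :|: Lp) M -> R |
     let z := fun p => x (inl p) in let a := fun s => x (inr s) in
     (\sum_(J : {set V} | (J \subset M) && (i \in J))
         persp (ell z a J (M :\: J)) (ell z a (J :\: [set i]) (M :\: J))
       <= (zL z i)%:E)%E /\
     (forall J : {set V}, J \subset M -> 0 <= ell z a J (M :\: J))].

(* Main.v *)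
Require Import Defs.
From mathcomp Require Import all_boot all_order all_algebra.
From mathcomp Require Import all_classical all_reals all_analysis.
From mathcomp Require Import ring lra unstable.
Import Order.TTheory GRing.Theory Num.Theory.
Set Implicit Arguments. Unset Strict Implicit. Unset Printing Implicit Defensive.
Local Open Scope ring_scope.
Local Open Scope classical_set_scope.

Section Aff.
Variables (R : realType) (T : finType).

Definition affine (F : (T -> R) -> R) :=
  exists (c : R) (coef : T -> R), forall x, F x = c + \sum_p coef p * x p.

Lemma aff_cst c : affine (fun _ => c).
Proof. exists c, (fun _ => 0) => x; by rewrite big1 ?addr0 // => p _; rewrite mul0r. Qed.

Lemma aff_proj q : affine (fun x => x q).
Proof.
exists 0, (fun p => if p == q then 1 else 0) => x.
rewrite add0r (bigD1 q) //= eqxx mul1r big1 ?addr0 // => p /negbTE ->.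
by rewrite mul0r.
Qed.

Lemma aff_add F G : affine F -> affine G -> affine (fun x => F x + G x).
Proof.
move=> [c [f Hf]] [d [g Hg]]; exists (c + d), (fun p => f p + g p) => x.
rewrite Hf Hg.
have -> : \sum_p (f p + g p) * x p = \sum_p f p * x p + \sum_p g p * x p.
  by rewrite -big_split; apply: eq_bigr => p _ /=; rewrite mulrDl.
lra.
Qed.

Lemma aff_scale a F : affine F -> affine (fun x => a * F x).
Proof.
move=> [c [f Hf]]; exists (a * c), (fun p => a * f p) => x.
rewrite Hf mulrDr mulr_sumr; congr (_ + _); apply: eq_bigr => p _.
by rewrite mulrA.
Qed.



Lemma aff_sum (I : Type) (r : seq I) (P : pred I) (F : I -> (T -> R) -> R) :
  (forall j, P j -> affine (F j)) -> affine (fun x => \sum_(j <- r | P j) F j x).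
Proof.
move=> HF; elim: r => [|j r IH].
  by under [X in affine X]funext do rewrite big_nil; exact: aff_cst.
under [X in affine X]funext do rewrite big_cons.
case: (boolP (P j)) => Pj /=; last exact: IH.
exact: aff_add (HF _ Pj) IH.
Qed.

Lemma aff_ext F G : (forall x, F x = G x) -> affine F -> affine G.
Proof. by move=> e [c [f Hf]]; exists c, f => x; rewrite -e. Qed.

Lemma aff_comb2 F (a b : R) x y : affine F -> a + b = 1 ->
  F (a *: x + b *: y) = a * F x + b * F y.
Proof.
move=> [c [f Hf]] ab; rewrite !Hf.
have -> : \sum_p f p * (a *: x + b *: y) p =
   a * (\sum_p f p * x p) + b * (\sum_p f p * y p).
  rewrite !mulr_sumr -big_split; apply: eq_bigr => p _ /=.
  have -> : (a *: x + b *: y) p = a * x p + b * y p by [].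
  lra.
have hc : c = a * c + b * c by rewrite -mulrDl ab mul1r.
rewrite !mulrDr {1}hc; lra.
Qed.

Lemma aff_combn F n (w : 'I_n -> R) (X : 'I_n -> T -> R) : affine F ->
  \sum_k w k = 1 -> F (\sum_k w k *: X k) = \sum_k w k * F (X k).
Proof.
move=> [c [f Hf]] sw; rewrite Hf fct_sumE.
under [in RHS]eq_bigr do rewrite Hf mulrDr.
rewrite big_split /= -mulr_suml sw mul1r; congr (_ + _).
under eq_bigr do rewrite mulr_sumr.
rewrite exchange_big /=; apply: eq_bigr => p _.
rewrite mulr_sumr; apply: eq_bigr => k _ /=.
have -> : (w p *: X p) k = w p * X p k by []. lra.
Qed.

End Aff.

Lemma proj_cont (R : realType) (T : finType) (p : T) :
  continuous ((fun x => x p) : {ptws T -> R^o} -> R^o).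
Proof.
move=> x.
exact: (@proj_continuous T (fun _ => R^o) p x).
Qed.

Lemma lin_cont (R : realType) (T : finType) (f : T -> R) :
  continuous ((fun x => \sum_p f p * x p) : {ptws T -> R^o} -> R^o).
Proof.
have H := @continuous_big R^o T +%R 0 predT add_continuous {ptws T -> R^o} (index_enum T)
  (fun p (x : {ptws T -> R^o}) => (f p * x p : R^o)).
apply: H => p _ x.
apply: (continuous_comp (@proj_cont R T p x)). exact: mulrl_continuous.
Qed.


Lemma aff_closed (R : realType) (T : finType) (F : (T -> R) -> R) :
  affine F -> closed ([set x | F x <= 0] : set {ptws T -> R^o}).
Proof.
move=> [c [f Hf]].
have -> : [set x | F x <= 0] = (fun x => \sum_p f p * x p) @^-1` [set y : R^o | y <= - c].
  apply/seteqP; split => x /=; rewrite Hf; lra.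
apply: preimage_closed; last exact: closed_le.
by move=> x _; apply: lin_cont.
Qed.

Section Persp.
Variable R : realType.

Definition gq (b u v : R) := b * u - b ^+ 2 * v / 4.

Lemma gq_le_persp b u v : ((gq b u v)%:E <= persp u v)%E.
Proof.
rewrite /persp /gq; case: ifPn => v0.
  rewrite lee_fin ler_pdivlMr //.
  have h : 0 <= (u - b * v / 2) ^+ 2 by apply: sqr_ge0.
  rewrite expr2 in h; rewrite !expr2; nra.
case: ifPn => [/andP[/eqP -> /eqP ->]|_]; last exact: leey.
by rewrite lee_fin !mulr0 mul0r subr0.
Qed.

Lemma persp_cases u v :
  persp u v = (gq (if 0 < v then 2 * u / v else 0) u v)%:E \/
  (persp u v = (+oo)%E /\ forall K, exists b, K < gq b u v).
Proof.
rewrite /persp /gq; case: ifPn => v0.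
  left; congr (_%:E); field; by rewrite gt_eqF.
case: ifPn => [/andP[/eqP -> /eqP ->]|uv]; first by left; congr (_%:E); rewrite !(mul0r, mulr0, expr0n, subr0).
right; split => // K.
have vle : v <= 0 by rewrite leNgt.
have [u0|u0] := eqVneq u 0.
  have v0' : v < 0.
    rewrite lt_neqAle vle andbT; apply/negP => /eqP v00.
    by move: uv; rewrite u0 v00 eqxx.
  have w0 : 0 < - v / 4 by rewrite divr_gt0 // oppr_gt0.
  move: w0; set w := - v / 4 => w0.
  have vw : v = - (4 * w) by rewrite /w; field.
  exists ((`|K| + 1) / w + 1).
  have hK : K <= `|K| := ler_norm K.
  have e1 : (`|K| + 1) / w * w = `|K| + 1 by rewrite divfK // gt_eqF.
  have hpos : 0 <= (`|K| + 1) / w by rewrite divr_ge0 // ?addr_ge0 // ltW.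
  move: e1 hpos; set y := (`|K| + 1) / w => e1 hpos.
  rewrite u0 mulr0 sub0r vw.
  have -> : - ((y + 1) ^+ 2 * - (4 * w) / 4) = (y + 1) ^+ 2 * w by field.
  rewrite expr2; nra.
exists ((`|K| + 1) / u).
have hK : K <= `|K| := ler_norm K.
rewrite divfK //.
have : 0 <= ((`|K| + 1) / u) ^+ 2 by apply: sqr_ge0.
have : 0 <= - v / 4 by rewrite divr_ge0 // oppr_ge0.
nra.
Qed.

Lemma persp_sum (I : finType) (P : pred I) (u v : I -> R) (t : R) :
  (\sum_(j | P j) persp (u j) (v j) <= t%:E)%E <->
  (forall b : I -> R, \sum_(j | P j) gq (b j) (u j) (v j) <= t).
Proof.
split.
  move=> H b; rewrite -lee_fin; apply: le_trans H.
  rewrite -sumEFin; apply: lee_sum => j _; exact: gq_le_persp.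
move=> H.
have [[j Pj Hj]|nex] := pselect (exists2 j, P j & persp (u j) (v j) = (+oo)%E).
  exfalso.
  have [_ /(_ t) [b0 hb0]] : persp (u j) (v j) = (+oo)%E /\ forall K, exists b, K < gq b (u j) (v j).
    case: (persp_cases (u j) (v j)) => // -[] ; by rewrite Hj.
  have := H (fun k => if k == j then b0 else 0).
  rewrite (bigD1 j) //= eqxx big1 ?addr0; first by move=> /(lt_le_trans hb0); rewrite ltxx.
  move=> k /andP[_ /negbTE ->]; by rewrite /gq !mul0r expr0n /= mul0r mul0r subr0.
have := H (fun j => if 0 < v j then 2 * u j / v j else 0).
rewrite -lee_fin -sumEFin => /(le_trans _); apply.
rewrite le_eqVlt; apply/orP; left; apply/eqP; apply: eq_bigr => j Pj.
case: (persp_cases (u j) (v j)) => // -[hj _].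
by exfalso; apply: nex; exists j.
Qed.

End Persp.

Section Struct.
Variables (R : realType) (V : finType) (E : {set {set V}}) (Lm Lp : {set V})
  (i : V) (M : {set V}).

Local Notation FT := (fullT E (Lm :|: Lp) M).

Definition zz (x : FT -> R) := fun p => x (inl p).
Definition aa (x : FT -> R) := fun s => x (inr s).

Lemma aff_zS S : affine (fun x : FT -> R => zS (zz x) (aa x) S).
Proof.
rewrite /zS; case: (#|S| == 0%N); first exact: aff_cst.
case: (#|S| == 1%N).
  case: [pick k in S] => [k|]; last exact: aff_cst.
  exact: aff_proj.
case: (S \in E).
  rewrite /zE; case: insub => [e|]; last exact: aff_cst.
  exact: aff_proj.
case: insub => [s|]; last exact: aff_cst.
exact: aff_proj.
Qed.

Lemma aff_ell J1 J2 : affine (fun x : FT -> R => ell (zz x) (aa x) J1 J2).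
Proof.
rewrite /ell; apply: aff_sum => t _; apply: aff_scale; exact: aff_zS.
Qed.

Lemma aff_zL k : affine (fun x : FT -> R => zL (zz x) k).
Proof.
rewrite /zL; case: insub => [l|]; last exact: aff_cst.
exact: aff_proj.
Qed.

Definition Fb (b : {set V} -> R) (x : FT -> R) :=
  \sum_(J : {set V} | (J \subset M) && (i \in J))
     gq (b J) (ell (zz x) (aa x) J (M :\: J)) (ell (zz x) (aa x) (J :\: [set i]) (M :\: J))
  - zL (zz x) i.

Definition GJ (J : {set V}) (x : FT -> R) := - ell (zz x) (aa x) J (M :\: J).

Lemma aff_Fb b : affine (Fb b).
Proof.
rewrite /Fb.
apply: aff_add; last by apply: (aff_ext (F := fun x => -1 * zL (zz x) i));
  [move=> x; rewrite mulN1r | apply: aff_scale; exact: aff_zL].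
apply: aff_sum => J _.
apply: (aff_ext (F := fun x => b J * ell (zz x) (aa x) J (M :\: J) +
   (- (b J ^+ 2 / 4)) * ell (zz x) (aa x) (J :\: [set i]) (M :\: J))).
  by move=> x; rewrite /gq; ring.
by apply: aff_add; apply: aff_scale; exact: aff_ell.
Qed.

Lemma aff_GJ J : affine (GJ J).
Proof.
apply: (aff_ext (F := fun x => -1 * ell (zz x) (aa x) J (M :\: J))).
  by move=> x; rewrite mulN1r.
apply: aff_scale; exact: aff_ell.
Qed.

Lemma relax_char (x : FT -> R) :
  @relax R V E Lm Lp M i x <-> (forall b, Fb b x <= 0) /\ (forall J : {set V}, J \subset M -> GJ J x <= 0).
Proof.
rewrite /relax /=.
split => -[H1 H2]; split.
- move=> b; rewrite /Fb subr_le0.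
  exact: ((persp_sum _ _ _ _).1 H1 b).
- by move=> J HJ; rewrite /GJ oppr_le0; exact: H2.
- apply/persp_sum => b; rewrite -subr_le0; exact: H1.
- by move=> J HJ; rewrite -oppr_le0; exact: H2.
Qed.

Lemma relax_closed :
  closed (@relax R V E Lm Lp M i : set {ptws FT -> R^o}).
Proof.
have -> : (@relax R V E Lm Lp M i : set {ptws FT -> R^o}) =
  (\bigcap_(b in [set: {set V} -> R]) [set x | Fb b x <= 0]) `&`
  (\bigcap_(J in [set J : {set V} | J \subset M]) [set x | GJ J x <= 0]).
  apply/seteqP; split => x.
    by move=> /relax_char [H1 H2]; split => [b _|J HJ]; [exact: H1 | exact: H2].
  by move=> [H1 H2]; apply/relax_char; split => [b|J HJ]; [exact: H1 | exact: H2].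
apply: closedI; apply: closed_bigI => j _; apply: aff_closed; [exact: aff_Fb | exact: aff_GJ].
Qed.

Local Open Scope convex_scope.
Lemma relax_convex : convex_set (@relax R V E Lm Lp M i).
Proof.
move=> x y l /set_mem /relax_char [Hx1 Hx2] /set_mem /relax_char [Hy1 Hy2].
apply/mem_set.
have -> : x <| l |> y = l%:num *: x + onem (l%:num) *: y by [].
have hl : l%:num + onem (l%:num) = 1 by rewrite /onem; ring.
have l0 : 0 <= l%:num by [].
have l1 : 0 <= onem (l%:num) by rewrite onem_ge0.
apply/relax_char; split.
  move=> b; rewrite (aff_comb2 _ _ (aff_Fb b) hl).
  have := Hx1 b; have := Hy1 b; nra.
move=> J HJ; rewrite (aff_comb2 _ _ (aff_GJ J) hl).
have := Hx2 J HJ; have := Hy2 J HJ; nra.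
Qed.

End Struct.

Local Close Scope classical_set_scope.

Section Comb.
Variables (R : realType) (V : finType).

Lemma sum_subset_prod (A : {set V}) (a b : V -> R) :
  \sum_(t : {set V} | t \subset A) \prod_(k in A) (if k \in t then a k else b k)
  = \prod_(k in A) (a k + b k).
Proof.
have H := @bigA_distr R 0 1 *%R +%R V (fun k => if k \in A then a k else 0)
   (fun k => if k \in A then b k else 1).
rewrite big_mkcond [RHS]big_mkcond /=.
have -> : \prod_k (if k \in A then a k + b k else 1) =
  \prod_k ((if k \in A then a k else 0) + (if k \in A then b k else 1)).
  by apply: eq_bigr => k _; case: (k \in A); rewrite ?add0r.
rewrite H; apply: eq_bigr => t _.
case: ifP => tA.
  rewrite big_mkcond; apply: eq_bigr => k _.
  case: (boolP (k \in A)) => kA //.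
  have -> : (k \in t) = false.
    by apply/negP => kt; move: kA; rewrite (fintype.subsetP tA).
  by [].
have /subsetPn [k kt kA] : ~~ (t \subset A) by rewrite tA.
by rewrite (bigD1 k) //= kt (negbTE kA) mul0r.
Qed.

Lemma prod_if_sub (A t : {set V}) (c : V -> R) : t \subset A ->
  \prod_(k in A) (if k \in t then c k else 1) = \prod_(k in t) c k.
Proof.
move=> tA; rewrite -big_mkcondr; apply: eq_bigl => k /=.
by apply/andP/idP => [[]//|kt]; split => //; rewrite (fintype.subsetP tA).
Qed.

Lemma prod_setU (A B : {set V}) (F : V -> R) : [disjoint A & B] ->
  \prod_(k in A :|: B) F k = \prod_(k in A) F k * \prod_(k in B) F k.
Proof.
move=> dAB; rewrite -bigU //; apply: eq_bigl => k; by rewrite !inE.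
Qed.

End Comb.

Section QPlift.
Variables (R : realType) (V : finType) (E : {set {set V}}) (Lm Lp : {set V})
  (i : V) (M : {set V}).
Hypothesis hE : forall e, e \in E -> exists j k : V, j != k /\ e = [set j; k].

Local Notation OT := (origT E (Lm :|: Lp)).

Definition liftA (q : OT -> R) : auxT E M -> R := fun s => \prod_(k in val s) zV q k.

Lemma zS_lift (q : OT -> R) (S : {set V}) : @QP_points R V E Lm Lp q -> S \subset M ->
  zS q (liftA q) S = \prod_(k in S) zV q k.
Proof.
move=> [_ [_ [hed _]]] SM.
rewrite /zS; case: ifP => [/eqP/cards0_eq -> | n0]; first by rewrite big_set0.
case: ifP => [/cards1P [k ->] | n1].
  case: pickP => [k' |]; last by move=> /(_ k); rewrite inE eqxx.
  by rewrite inE => /eqP ->; rewrite big_set1.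
case: ifP => [SE | SnE].
  have [j [k [jk eS]]] := hE SE.
  rewrite eS hed //; last by rewrite -eS.
  by rewrite big_setU1 ?inE // big_set1.
case: insubP => [s _ vs | nP]; first by rewrite /liftA vs.
exfalso; move/negP: nP; apply.
have -> : (1 < #|S|)%N by move: n0 n1; case: #|S| => [|[|]].
by rewrite SM SnE.
Qed.

Lemma ell_lift (q : OT -> R) (J1 J2 : {set V}) : @QP_points R V E Lm Lp q -> [disjoint J1 & J2] ->
  J1 :|: J2 \subset M ->
  ell q (liftA q) J1 J2 = \prod_(k in J1) zV q k * \prod_(k in J2) (1 - zV q k).
Proof.
move=> hq d12 sM; rewrite /ell.
transitivity (\sum_(t : {set V} | t \subset J2) (\prod_(k in J1) zV q k *
   \prod_(k in J2) (if k \in t then - zV q k else 1))).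
  apply: eq_bigr => t tJ2.
  rewrite zS_lift //; last first.
    by apply: (fintype.subset_trans _ sM); rewrite finset.setUS.
  rewrite prod_setU; last by apply: disjointWr d12.
  rewrite prod_if_sub // prodrN; ring.
rewrite -mulr_sumr sum_subset_prod; congr (_ * _).
by apply: eq_bigr => k _; rewrite addrC.
Qed.

Lemma wsum (q : OT -> R) : i \in M ->
  \sum_(J : {set V} | (J \subset M) && (i \in J))
     (\prod_(k in J :\ i) zV q k * \prod_(k in M :\: J) (1 - zV q k)) = 1.
Proof.
move=> iM.
have H := sum_subset_prod M (fun k => if k == i then 1 else zV q k)
   (fun k => if k == i then 0 else 1 - zV q k).
have e1 : \prod_(k in M) ((if k == i then 1 else zV q k) + (if k == i then 0 else 1 - zV q k)) = 1.
  by apply: big1 => k _; case: (k == i) => //=; rewrite ?addr0 //; ring.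
rewrite e1 in H.
apply: eq_trans (esym _) H; rewrite (bigID (fun t : {set V} => i \in t)) /=.
rewrite [X in _ + X]big1 ?addr0; last first.
  move=> t /andP[_ nit]; rewrite (big_setD1 i) //= eqxx (negbTE nit) mul0r //.
apply: eq_bigr => t /andP[tM it].
rewrite (bigID (fun k => k \in t)) /=; congr (_ * _).
  transitivity (\prod_(k in M | k \in t) (if k == i then 1 else zV q k)).
    by apply: eq_bigr => k /andP[_ ->].
  have -> : \prod_(k in M | k \in t) (if k == i then 1 else zV q k) =
            \prod_(k in t) (if k == i then 1 else zV q k).
    apply: eq_bigl => k /=; apply/andP/idP => [[]//|kt]; split => //.
    by rewrite (fintype.subsetP tM).
  rewrite (big_setD1 i) //= eqxx mul1r; apply: eq_bigr => k.
  by rewrite !inE => /andP[/negbTE -> _].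
transitivity (\prod_(k in M | k \notin t) (1 - zV q k)).
  apply: eq_bigr => k /andP[_ nkt].
  have -> : (k == i) = false by apply/eqP => eki; move: nkt; rewrite eki it.
  by rewrite (negbTE nkt).
by apply: eq_bigl => k; rewrite !inE andbC.
Qed.

Lemma persp_mul (c w : R) : 0 <= w -> persp (c * w) w = (c ^+ 2 * w)%:E.
Proof.
rewrite /persp le_eqVlt => /orP[/eqP <-|w0].
  by rewrite ltxx mulr0 eqxx mulr0.
by rewrite w0; congr (_%:E); field; rewrite gt_eqF.
Qed.

End QPlift.

Section Final.
Variables (R : realType) (V : finType) (E : {set {set V}}) (Lm Lp : {set V})
  (i : V) (M : {set V}).
Hypothesis hE : forall e, e \in E -> exists j k : V, j != k /\ e = [set j; k].

Local Notation OT := (origT E (Lm :|: Lp)).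

Definition lift (q : OT -> R) : fullT E (Lm :|: Lp) M -> R :=
  fun y => match y with inl o => q o | inr s => liftA q s end.

Lemma relax_lift (q : OT -> R) : @QP_points R V E Lm Lp q -> i \in Lp -> i \in M ->
  @relax R V E Lm Lp M i (lift q).
Proof.
move=> hq iLp iM.
have [hLp [_ [_ hz]]] := hq.
have hdisj : forall J K : {set V}, J \subset K -> [disjoint J & M :\: K].
  move=> J K JK; rewrite finset.disjoints_subset; apply/fintype.subsetP => k kJ.
  by rewrite !inE (fintype.subsetP JK) .
have hsub : forall J K : {set V}, J \subset M -> J :|: (M :\: K) \subset M.
  move=> J K JM; apply/fintype.subsetP => k; rewrite !inE => /orP[/(fintype.subsetP JM)//|/andP[_ ->]//].
have sD : forall J : {set V}, J :\ i \subset J by move=> J; apply: subsetDl.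
change ((\sum_(J : {set V} | (J \subset M) && (i \in J))
    persp (ell q (@liftA R V E Lm Lp M q) J (M :\: J)) (ell q (@liftA R V E Lm Lp M q) (J :\: [set i]) (M :\: J))
      <= (zL q i)%:E)%E /\
  forall J : {set V}, J \subset M -> 0 <= ell q (@liftA R V E Lm Lp M q) J (M :\: J)).
split.
  apply: (@le_trans _ _ ((zV q i ^+ 2)%:E)); last by rewrite lee_fin; exact: hLp.
  have -> : (zV q i ^+ 2)%:E = (\sum_(J : {set V} | (J \subset M) && (i \in J))
     (zV q i ^+ 2 * (\prod_(k in J :\ i) zV q k * \prod_(k in M :\: J) (1 - zV q k))))%:E.
    by rewrite -mulr_sumr wsum // mulr1.
  rewrite -sumEFin le_eqVlt; apply/orP; left; apply/eqP; apply: eq_bigr => J /andP[JM iJ].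
  rewrite !ell_lift //; try exact: hsub; try exact: hdisj; last first.
    exact: hsub (fintype.subset_trans (sD J) JM).
  rewrite (big_setD1 i) //= -mulrA persp_mul //.
  apply: mulr_ge0; apply: prodr_ge0 => k _.
    by case/andP: (hz k).
  by rewrite subr_ge0; case/andP: (hz k).
move=> J JM; rewrite ell_lift //; try exact: hsub; try exact: hdisj.
apply: mulr_ge0; apply: prodr_ge0 => k _.
  by case/andP: (hz k).
by rewrite subr_ge0; case/andP: (hz k).
Qed.

End Final.

Unset Implicit Arguments. Set Strict Implicit.

Theorem proposition5 (R : realType) (V : finType) (E : {set {set V}})
  (Lm Lp : {set V}) (i : V) (M : {set V}) :
  (forall e, e \in E -> exists j k : V, j != k /\ e = [set j; k]) ->
  [disjoint Lm & Lp] ->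
  i \in Lp ->
  M \subset @nbhd V E (Lm :|: Lp) i ->
  i \in M ->
  closed (@relax R V E Lm Lp M i : set {ptws @fullT V E (Lm :|: Lp) M -> R^o}) /\
  convex_set (@relax R V E Lm Lp M i) /\
  (@QP R V E Lm Lp `<=` (fun x => x \o inl) @` @relax R V E Lm Lp M i)%classic.
Proof.
move=> hE _ iLp _ iM; split; first exact: relax_closed.
split; first exact: relax_convex.
move=> x [n [w [p [w0 [w1 [pQ ->]]]]]].
exists (\sum_k w k *: @lift R V E Lm Lp M (p k)).
  apply/relax_char; split.
    move=> b; rewrite (aff_combn _ (aff_Fb E Lm Lp i M b) w1).
    rewrite -oppr_ge0 -sumrN; apply: sumr_ge0 => k _; rewrite -mulrN mulr_ge0 //.
    rewrite oppr_ge0.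
    by have [+ _] := (relax_char i _).1 (relax_lift hE (pQ k) iLp iM); apply.
  move=> J JM; rewrite (aff_combn _ (aff_GJ R E Lm Lp M J) w1).
  rewrite -oppr_ge0 -sumrN; apply: sumr_ge0 => k _; rewrite -mulrN mulr_ge0 //.
  rewrite oppr_ge0.
  by have [_ +] := (relax_char i _).1 (relax_lift hE (pQ k) iLp iM); apply.
apply/funext => o /=; rewrite !fct_sumE; apply: eq_bigr => k _; by [].
Qed.
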